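(* In the Com-IC model, for any fixed $\mathcal{B}$-seed set $S_\mathcal{B}$, the function $S_\mathcal{A}\mapsto\sigma_\mathcal{A}(S_\mathcal{A},S_\mathcal{B})$ is monotonically non-decreasing for every GAP vector in $\mathbf{Q}^+\cup\mathbf{Q}^-$. Moreover, for any fixed $\mathcal{A}$-seed set $S_\mathcal{A}$, the function $S_\mathcal{B}\mapsto\sigma_\mathcal{A}(S_\mathcal{A},S_\mathcal{B})$ is monotonically non-decreasing for every GAP vector in $\mathbf{Q}^+$ and monotonically non-increasing for every GAP vector in $\mathbf{Q}^-$.
   Context: Com-IC model. Let $G=(V,E,p)$ be a directed graph with $p:E\to[0,1]$, write $p_{u,v}=p(u,v)$, and $N^-(v)$ for the in-neighbours of $v$. Two items $\mathcal{A},\mathcal{B}$; GAPs $\mathbf{Q}=(q_{\mathcal{A}|\emptyset},q_{\mathcal{A}|\mathcal{B}},q_{\mathcal{B}|\emptyset},q_{\mathcal{B}|\mathcal{A}})\in[0,1]^4$. Given seed sets $S_\mathcal{A},S_\mathcal{B}\subseteq V$, randomness: each edge $(u,v)$ independently live w.p. $p_{u,v}$; each node $v$ independently draws $\alpha^v_\mathcal{A},\alpha^v_\mathcal{B}$ uniform on $[0,1]$, a uniformly random permutation $\pi_v$ of $N^-(v)$, and a fair coin $\tau_v\in\{\mathcal{A},\mathcal{B}\}$. For each item $X$ each node is $X$-idle, $X$-suspended, $X$-adopted or $X$-rejected; initially all idle. At step $0$ nodes of $S_\mathcal{A}$ become $\mathcal{A}$-adopted and nodes of $S_\mathcal{B}$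 become $\mathcal{B}$-adopted (order for nodes in both given by $\tau_v$). At step $t\ge1$, $v$ is informed of $X$ by in-neighbour $u$ if $(u,v)$ is live and $u$ adopted $X$ at step $t-1$; informing in-neighbours are processed in order $\pi_v$ (an in-neighbour that adopted both items is processed for both, in its adoption order). When $v$ is informed of $X$ ($Y$ the other item) while $X$-idle: if $Y$-adopted, $v$ becomes $X$-adopted if $\alpha^v_X\le q_{X|Y}$, else $X$-rejected; otherwise $X$-adopted if $\alpha^v_X\le q_{X|\emptyset}$, else $X$-suspended. Informing a non-$X$-idle node of $X$ has no effect. Reconsideration: when an $X$-suspended node becomes $Y$-adopted, it becomes $X$-adopted if $\alpha^v_X\le q_{X|Y}$, else $X$-rejected. The process stops when nothing changes. $\sigma_\mathcal{A}(S_\mathcal{A},S_\mathcal{B})$ is the expected final number of $\mathcal{A}$-adopted nodes. $\mathbf{Q}^+$: $q_{\mathcal{A}|\emptyset}\le q_{\mathcal{A}|\mathcal{B}}$ and $q_{\mathcal{B}|\emptyset}\le q_{\mathcal{B}|\mathcal{A}}$. $\mathbf{Q}^-$: $q_{\mathcal{A}|\emptyset}\ge q_{\mathcal{A}|\mathcal{B}}$ and $q_{\mathcal{B}|\emptyset}\ge q_{\mathcal{B}|\mathcal{A}}$. *)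

(* Defs.v *)
From HB Require Import structures.
From mathcomp Require Import all_boot all_order all_algebra all_fingroup.
Set Implicit Arguments. Unset Strict Implicit. Unset Printing Implicit Defensive.
Import Order.TTheory GRing.Theory Num.Theory.
Local Open Scope ring_scope.

(* Items: true = item A, false = item B; the "other" item of X is ~~ X. *)
Definition itemA : bool := true.
Definition itemB : bool := false.

Inductive status := Idle | Susp | Adopt | Rej.
Definition is_adopt (s : status) : bool := if s is Adopt then true else false.

Record gap (R : Type) := Gap { qA0 : R; qAB : R; qB0 : R; qBA : R }.

Definition gap_valid (R : realFieldType) (Q : gap R) : Prop :=
  [/\ 0 <= qA0 Q <= 1, 0 <= qAB Q <= 1, 0 <= qB0 Q <= 1 & 0 <= qBA Q <= 1].

Definition Qplus (R : realFieldType) (Q : gap R) : Prop :=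
  qA0 Q <= qAB Q /\ qB0 Q <= qBA Q.
Definition Qminus (R : realFieldType) (Q : gap R) : Prop :=
  qA0 Q >= qAB Q /\ qB0 Q >= qBA Q.

Section ComIC.
Variables (R : realFieldType) (V : finType).
Variables (E : rel V) (p : V -> V -> R) (Q : gap R).

(* q_{X|Y} if y (the other item Y is adopted), else q_{X|emptyset} *)
Definition qcond (X y : bool) : R :=
  if X then (if y then qAB Q else qA0 Q) else (if y then qBA Q else qB0 Q).

(* Local state of a node: its per-item status, and the list of items it has
   adopted during the current step, in adoption order. *)
Definition lstate := ((bool -> status) * seq bool)%type.

Definition upd (st : bool -> status) (X : bool) (s : status) : bool -> status :=
  fun Y => if Y == X then s else st Y.

Definition adopt (a : bool -> R) (X : bool) (ls : lstate) : lstate :=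
  let: (st, l) := ls in
  let st' := upd st X Adopt in
  if st (~~ X) is Susp then
    if a (~~ X) <= qcond (~~ X) true then (upd st' (~~ X) Adopt, l ++ [:: X; ~~ X])
    else (upd st' (~~ X) Rej, rcons l X)
  else (st', rcons l X).

Definition inform (a : bool -> R) (X : bool) (ls : lstate) : lstate :=
  let: (st, l) := ls in
  if st X is Idle then
    if st (~~ X) is Adopt then
      (if a X <= qcond X true then adopt a X ls else (upd st X Rej, l))
    else if a X <= qcond X false then adopt a X ls else (upd st X Susp, l)
  else ls.

(* Global state: statuses, and items adopted at the previous step (in order). *)
Definition gstate := ((V -> bool -> status) * (V -> seq bool))%type.

Section Run.
Variables (live : V * V -> bool) (alpha : V -> bool -> R)
          (pi : V -> {perm V}) (tau : V -> bool) (SA SB : {set V}).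

Definition seeds (v : V) : seq bool :=
  if (v \in SA) && (v \in SB) then [:: tau v; ~~ tau v]
  else if v \in SA then [:: itemA] else if v \in SB then [:: itemB] else [::].

Definition init_state : gstate :=
  let loc v := foldl (fun ls X => adopt (alpha v) X ls)
                     ((fun _ => Idle), [::]) (seeds v) in
  (fun v => (loc v).1, fun v => (loc v).2).

(* step t >= 1: in-neighbours of v are processed in the order induced by the
   uniformly random permutation pi v (restricted to the live in-neighbours). *)
Definition step (g : gstate) : gstate :=
  let ev v := flatten [seq (if live (u, v) then g.2 u else [::])
                      | u <- map (pi v) (enum V)] in
  let loc v := foldl (fun ls X => inform (alpha v) X ls) (g.1 v, [::]) (ev v) in
  (fun v => (loc v).1, fun v => (loc v).2).

(* At most 2|V| steps contain an adoption; after a step with no adoption the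
   state is a fixpoint, so 2|V|+1 iterations reach the final state. *)
Definition final_state : gstate := iter (2 * #|V| + 1) step init_state.

Definition numA : nat := #|[set v | is_adopt (final_state.1 v itemA)]|.
End Run.

(* The outcome depends on alpha^v_X only through the comparisons
   alpha <= q_{X|0} and alpha <= q_{X|Y}. With lo/hi the min/max of these two
   thresholds, [0,1] splits into cells [0,lo], (lo,hi], (hi,1] of lengths
   lo, hi-lo, 1-hi, on which the outcome is constant; representatives lo, hi, 1. *)
Definition lo (X : bool) : R := Num.min (qcond X false) (qcond X true).
Definition hi (X : bool) : R := Num.max (qcond X false) (qcond X true).
Definition cell_rep (X : bool) (c : 'I_3) : R :=
  match val c with 0 => lo X | 1 => hi X | _ => 1 end.
Definition cell_w (X : bool) (c : 'I_3) : R :=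
  match val c with 0 => lo X | 1 => hi X - lo X | _ => 1 - hi X end.

Definition edge_w (live : {ffun V * V -> bool}) : R :=
  \prod_(e : V * V)
     (if E e.1 e.2 then (if live e then p e.1 e.2 else 1 - p e.1 e.2)
      else (if live e then 0 else 1)).

Definition sigmaA (SA SB : {set V}) : R :=
  \sum_(live : {ffun V * V -> bool})
  \sum_(c : {ffun V * bool -> 'I_3})
  \sum_(pi : {ffun V -> {perm V}})
  \sum_(tau : {ffun V -> bool})
    edge_w live * (\prod_(x : V * bool) cell_w x.2 (c x))
    * ((#|{perm V}|%:R)^-1 ^+ #|V|) * ((2%:R)^-1 ^+ #|V|)
    * (numA live (fun v X => cell_rep X (c (v, X))) pi tau SA SB)%:R.

End ComIC.

(* Main.v *)
Require Import Defs.
From HB Require Import structures.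
From mathcomp Require Import all_boot all_order all_algebra all_fingroup.
From Stdlib Require Import FunctionalExtensionality.
Import Order.TTheory GRing.Theory Num.Theory.
Set Implicit Arguments. Unset Strict Implicit. Unset Printing Implicit Defensive.

Definition isI (s : status) : bool := if s is Idle then true else false.
Definition isS (s : status) : bool := if s is Susp then true else false.
Definition isR (s : status) : bool := if s is Rej then true else false.

Section Abs.
Variable c : bool -> bool -> bool.

Definition adoptb (X : bool) (ls : lstate) : lstate :=
  let: (st, l) := ls in
  let st' := upd st X Adopt in
  if st (~~ X) is Susp then
    if c (~~ X) true then (upd st' (~~ X) Adopt, l ++ [:: X; ~~ X])
    else (upd st' (~~ X) Rej, rcons l X)
  else (st', rcons l X).

Definition informb (X : bool) (ls : lstate) : lstate :=
  let: (st, l) := ls in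
  if st X is Idle then
    if st (~~ X) is Adopt then
      (if c X true then adoptb X ls else (upd st X Rej, l))
    else if c X false then adoptb X ls else (upd st X Susp, l)
  else ls.

Definition nodef (st : bool -> status) (e : seq bool) : lstate :=
  foldl (fun ls X => informb X ls) (st, [::]) e.

Lemma informb_pers (X z : bool) ls :
  ~~ isI (ls.1 z) -> ~~ isI ((informb X ls).1 z).
Proof.
case: ls => st l /=.
have -> : st = (fun X => if X then st true else st false)
  by apply: functional_extensionality => -[].
move: (st true) (st false) => a b.
case: X; case: z; case: a; case: b; rewrite /informb /adoptb /upd /=;
case: (c true true); case: (c true false); case: (c false true); case: (c false false) => //=.
Qed.

Lemma informb_self (X : bool) ls : ~~ isI ((informb X ls).1 X).
Proof.
case: ls => st l /=.
have -> : st = (fun X => if X then st true else st false)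
  by apply: functional_extensionality => -[].
move: (st true) (st false) => a b.
case: X; case: a; case: b; rewrite /informb /adoptb /upd /=;
case: (c true true); case: (c true false); case: (c false true); case: (c false false) => //=.
Qed.

Lemma informb_noop (X : bool) ls : ~~ isI (ls.1 X) -> informb X ls = ls.
Proof. by case: ls => st l /=; rewrite /informb; case: (st X). Qed.

Lemma fold_noop ls s : ~~ isI (ls.1 true) -> ~~ isI (ls.1 false) ->
  foldl (fun ls X => informb X ls) ls s = ls.
Proof.
elim: s => //= x s IH H1 H2; rewrite informb_noop ?IH //; by case: x.
Qed.

Definition pat (e : seq bool) : seq bool :=
  if e is x :: s then x :: (if ~~ x \in s then [:: ~~ x] else [::]) else [::].

Lemma fold_rest ls x s : ~~ isI (ls.1 x) ->
  foldl (fun ls X => informb X ls) ls s =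
  foldl (fun ls X => informb X ls) ls (if ~~ x \in s then [:: ~~ x] else [::]).
Proof.
elim: s ls => //= y s IH ls H.
have [->|Hy] := eqVneq y x.
  rewrite informb_noop // IH // in_cons.
  by case: (x).
have Hy' : y = ~~ x by move: Hy; case: (x); case: (y).
have Hx : x = ~~ y by rewrite Hy' negbK.
rewrite in_cons -Hy' eqxx /= fold_noop //; rewrite Hx in H;
  case: (y) H => H; first [exact: informb_self | exact: informb_pers].
Qed.
End Abs.

Lemma nodef_pat c st e : nodef c st e = nodef c st (pat e).
Proof.
case: e => // x s; rewrite /nodef /=.
rewrite (@fold_rest c _ x s) //; exact: (informb_self c x (st, [::])).
Qed.

Lemma mem_pat b e : (b \in pat e) = (b \in e).
Proof.
case: e => // x s.
by case: b; case: x; case Ht: (true \in s); case Hf: (false \in s);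
  rewrite /= ?in_cons ?Ht ?Hf.

Qed.

Lemma head_pat e : head false (pat e) = head false e.
Proof. by case: e. Qed.

Definition stP (a b : status) : bool -> status := fun X => if X then a else b.
Definition cfun (b0 b1 b2 b3 : bool) : bool -> bool -> bool :=
  fun X y => if X then (if y then b1 else b0) else (if y then b3 else b2).

Definition invn1 (c : bool -> bool -> bool) X sX sY :=
  (isS sX ==> ~~ c X false && ~~ is_adopt sY) && (isR sX ==> ~~ c X true && is_adopt sY).
Definition invn c (st : bool -> status) :=
  invn1 c true (st true) (st false) && invn1 c false (st false) (st true).
Definition crossM (st1 st2 : bool -> status) :=
  [&& ~~ isI (st1 true) ==> ~~ isI (st2 true), is_adopt (st1 true) ==> is_adopt (st2 true),
      ~~ isI (st2 false) ==> ~~ isI (st1 false) & is_adopt (st2 false) ==> is_adopt (st1 false)].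
Definition crossP (st1 st2 : bool -> status) :=
  [&& ~~ isI (st1 true) ==> ~~ isI (st2 true), is_adopt (st1 true) ==> is_adopt (st2 true),
      ~~ isI (st1 false) ==> ~~ isI (st2 false) & is_adopt (st1 false) ==> is_adopt (st2 false)].
Definition ordM (L1 L2 : seq bool) :=
  [&& true \in L1, false \in L1, true \in L2, false \in L2 & head false L1] ==> head false L2.
Definition QM (c : bool -> bool -> bool) := (c true true ==> c true false) && (c false true ==> c false false).
Definition QP (c : bool -> bool -> bool) := (c true false ==> c true true) && (c false false ==> c false true).

Definition propM c st1 st2 e1 e2 :=
  [&& QM c, invn c st1, invn c st2, crossM st1 st2,
   (true \in e1) ==> (true \in e2) || ~~ isI (st2 true),
   (false \in e2) ==> (false \in e1) || ~~ isI (st1 false) &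
   (isI (st2 true) && isI (st1 false) && head false e1) ==> head false e2]
  ==> (crossM (nodef c st1 e1).1 (nodef c st2 e2).1 && ordM (nodef c st1 e1).2 (nodef c st2 e2).2).

Definition propP c st1 st2 e1 e2 :=
  [&& QP c, invn c st1, invn c st2, crossP st1 st2,
   (true \in e1) ==> (true \in e2) || ~~ isI (st2 true) &
   (false \in e1) ==> (false \in e2) || ~~ isI (st2 false)]
  ==> crossP (nodef c st1 e1).1 (nodef c st2 e2).1.

Definition single1 (st : bool -> status) (e : seq bool) (r : lstate) X :=
  [&& ~~ isI (st X) ==> ~~ isI (r.1 X), is_adopt (st X) ==> is_adopt (r.1 X),
      (X \in e) ==> ~~ isI (r.1 X), (is_adopt (r.1 X) && (X \notin r.2)) ==> is_adopt (st X)
    & (X \in r.2) ==> is_adopt (r.1 X)].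
Definition propS c st e :=
  invn c st ==> [&& invn c (nodef c st e).1, single1 st e (nodef c st e) true
                  & single1 st e (nodef c st e) false].

Definition allst := [:: Idle; Susp; Adopt; Rej].
Definition pats := [:: [::]; [:: true]; [:: false]; [:: true; false]; [:: false; true]].
Definition bs := [:: true; false].

Definition checkM :=
  all (fun b0 => all (fun b1 => all (fun b2 => all (fun b3 =>
  all (fun a1 => all (fun a2 => all (fun a3 => all (fun a4 =>
  all (fun e1 => all (fun e2 =>
    propM (cfun b0 b1 b2 b3) (stP a1 a2) (stP a3 a4) e1 e2) pats) pats)
  allst) allst) allst) allst) bs) bs) bs) bs.
Definition checkP :=
  all (fun b0 => all (fun b1 => all (fun b2 => all (fun b3 =>
  all (fun a1 => all (fun a2 => all (fun a3 => all (fun a4 =>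
  all (fun e1 => all (fun e2 =>
    propP (cfun b0 b1 b2 b3) (stP a1 a2) (stP a3 a4) e1 e2) pats) pats)
  allst) allst) allst) allst) bs) bs) bs) bs.
Definition checkS :=
  all (fun b0 => all (fun b1 => all (fun b2 => all (fun b3 =>
  all (fun a1 => all (fun a2 => all (fun e =>
    propS (cfun b0 b1 b2 b3) (stP a1 a2) e) pats)
  allst) allst) bs) bs) bs) bs.

Lemma checkM_ok : checkM = true. Proof. by vm_compute. Qed.
Lemma checkP_ok : checkP = true. Proof. by vm_compute. Qed.
Lemma checkS_ok : checkS = true. Proof. by vm_compute. Qed.

Lemma mem_bs b : b \in bs. Proof. by case: b. Qed.
Lemma allstP (P : status -> bool) : all P allst -> forall s, P s.
Proof. by rewrite /allst /= => /and5P[? ? ? ? _] []. Qed.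
Lemma bsP (P : bool -> bool) : all P bs -> forall s, P s.
Proof. by rewrite /bs /= => /and3P[? ? _] []. Qed.
Lemma pat_in e : pat e \in pats.
Proof. by case: e => // x s; case: x => /=; [case: (false \in s) | case: (true \in s)]. Qed.
Lemma cfunE (c : bool -> bool -> bool) : c = cfun (c true false) (c true true) (c false false) (c false true).
Proof. by apply: functional_extensionality => -[]; apply: functional_extensionality => -[]. Qed.
Lemma stPE (st : bool -> status) : st = stP (st true) (st false).
Proof. by apply: functional_extensionality => -[]. Qed.

Lemma propM_all c st1 st2 e1 e2 : propM c st1 st2 e1 e2.
Proof.
have -> : propM c st1 st2 e1 e2 = propM c st1 st2 (pat e1) (pat e2).
  by rewrite /propM !mem_pat !head_pat -!nodef_pat.
rewrite (cfunE c) (stPE st1) (stPE st2).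
move: checkM_ok; rewrite /checkM.
move=> /bsP/(_ (c true false)) /bsP/(_ (c true true))
        /bsP/(_ (c false false)) /bsP/(_ (c false true)).
move=> /allstP/(_ (st1 true)) /allstP/(_ (st1 false))
        /allstP/(_ (st2 true)) /allstP/(_ (st2 false)).
by move=> /allP/(_ _ (pat_in e1)) /allP/(_ _ (pat_in e2)).
Qed.

Lemma propP_all c st1 st2 e1 e2 : propP c st1 st2 e1 e2.
Proof.
have -> : propP c st1 st2 e1 e2 = propP c st1 st2 (pat e1) (pat e2).
  by rewrite /propP !mem_pat -!nodef_pat.
rewrite (cfunE c) (stPE st1) (stPE st2).
move: checkP_ok; rewrite /checkP.
move=> /bsP/(_ (c true false)) /bsP/(_ (c true true))
        /bsP/(_ (c false false)) /bsP/(_ (c false true)).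
move=> /allstP/(_ (st1 true)) /allstP/(_ (st1 false))
        /allstP/(_ (st2 true)) /allstP/(_ (st2 false)).
by move=> /allP/(_ _ (pat_in e1)) /allP/(_ _ (pat_in e2)).
Qed.

Lemma propS_all c st e : propS c st e.
Proof.
have -> : propS c st e = propS c st (pat e).
  by rewrite /propS /single1 !mem_pat -!nodef_pat.
rewrite (cfunE c) (stPE st).
move: checkS_ok; rewrite /checkS.
move=> /bsP/(_ (c true false)) /bsP/(_ (c true true))
        /bsP/(_ (c false false)) /bsP/(_ (c false true)).
move=> /allstP/(_ (st true)) /allstP/(_ (st false)).
by move=> /allP/(_ _ (pat_in e)).
Qed.

Lemma head_flat (T : Type) (s : seq T) (f1 f2 : T -> seq bool) :
  (forall u, true \in f1 u -> true \in f2 u) ->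
  (forall u, false \in f2 u -> false \in f1 u) ->
  (forall u, ordM (f1 u) (f2 u)) ->
  head false (flatten (map f1 s)) -> head false (flatten (map f2 s)).
Proof.
move=> P1 P2 P3; elim: s => //= u s IH.
have := P1 u; have := P2 u; have := P3 u.
case: (f1 u) => [|x t]; case: (f2 u) => [|y t'] /=.
- by move=> _ _ _.
- move=> _ H2 _ _; case: y H2 => //.
  by rewrite in_cons eqxx => /(_ isT).
- by move=> _ _ H1 hx; move: (H1); rewrite in_cons hx => /(_ isT).
- move=> H3 H2 H1 hx; case: y H3 H2 H1 => // H3 H2 H1.
  have hf : false \in false :: t' by rewrite in_cons.
  have ht : true \in x :: t by rewrite in_cons hx.
  move: H3; rewrite /ordM ht (H1 ht) (H2 hf) hf hx /=.
  by [].     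
Qed.

Section Global.
Variables (R : realFieldType) (V : finType) (Q : gap R).
Variables (live : V * V -> bool) (alpha : V -> bool -> R) (pi : V -> {perm V}).

Definition cmpv v : bool -> bool -> bool := fun X y => (alpha v X <= qcond Q X y)%R.
Definition ev (g : gstate V) v :=
  flatten [seq (if live (u, v) then g.2 u else [::]) | u <- map (pi v) (enum V)].

Lemma stepE g v : (step Q live alpha pi g).1 v = (nodef (cmpv v) (g.1 v) (ev g v)).1
  /\ (step Q live alpha pi g).2 v = (nodef (cmpv v) (g.1 v) (ev g v)).2.
Proof. by []. Qed.

Lemma mem_ev g v X :
  X \in ev g v -> exists u, live (u, v) /\ X \in g.2 u.
Proof.
rewrite /ev => /flatten_mapP[u _]; case hl: (live (u, v)) => // h.
by exists u.
Qed.

Lemma mem_ev2 g v X u : live (u, v) -> X \in g.2 u -> X \in ev g v.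
Proof.
move=> hl hx; rewrite /ev; apply/flatten_mapP; exists u; last by rewrite hl.
by apply/mapP; exists ((pi v)^-1 u)%g; rewrite ?mem_enum ?permKV.
Qed.

Definition Inv (g : gstate V) :=
  [/\ forall v, invn (cmpv v) (g.1 v),
      forall v X, X \in g.2 v -> is_adopt (g.1 v X) &
      forall u v X, live (u, v) -> is_adopt (g.1 u X) -> X \notin g.2 u -> ~~ isI (g.1 v X)].

Lemma single1X st e r X : single1 st e r true -> single1 st e r false -> single1 st e r X.
Proof. by case: X. Qed.

Lemma singleE g v X : invn (cmpv v) (g.1 v) ->
  let r := nodef (cmpv v) (g.1 v) (ev g v) in
  [/\ invn (cmpv v) r.1,
      ~~ isI (g.1 v X) -> ~~ isI (r.1 X),
      is_adopt (g.1 v X) -> is_adopt (r.1 X),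
      (X \in ev g v) -> ~~ isI (r.1 X) &
      [/\ is_adopt (r.1 X) -> X \notin r.2 -> is_adopt (g.1 v X)
        & (X \in r.2) -> is_adopt (r.1 X)]].
Proof.
move=> hi /=; have := propS_all (cmpv v) (g.1 v) (ev g v).
rewrite /propS hi /= => /and3P[h1 h2 h3].
move: (single1X X h2 h3) => /and5P[a b c d e].
split => //; first by move/(implyP a).
- by move/(implyP b).
- by move/(implyP c).
split; last by move/(implyP e).
by move=> x y; apply: (implyP d); rewrite x y.
Qed.

Lemma Inv_step g : Inv g -> Inv (step Q live alpha pi g).
Proof.
case=> hN hL h1; split.
- by move=> v; have [-> _] := stepE g v; have [] := singleE true (hN v).
- move=> v X; have [-> ->] := stepE g v; have [_ _ _ _ []] := singleE X (hN v); done.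
move=> u v X hl; have [-> ->] := stepE g u; have [-> _] := stepE g v.
have [_ _ _ _ [hu _]] := singleE X (hN u).
move=> ha hn; have hX := hu ha hn.
have [_ hp _ he _] := singleE X (hN v).
case hin: (X \in g.2 u).
  by apply: he; apply: (mem_ev2 hl hin).
by apply: hp; apply: h1 hl hX _; rewrite hin.
Qed.

Definition CrM (g1 g2 : gstate V) :=
  (forall v, crossM (g1.1 v) (g2.1 v)) /\ (forall v, ordM (g1.2 v) (g2.2 v)).
Definition CrP (g1 g2 : gstate V) := forall v, crossP (g1.1 v) (g2.1 v).

Lemma CrM_step g1 g2 : (forall v, QM (cmpv v)) -> Inv g1 -> Inv g2 -> CrM g1 g2 ->
  CrM (step Q live alpha pi g1) (step Q live alpha pi g2).
Proof.
move=> hQ [hN1 hL1 h11] [hN2 hL2 h12] [hC hO].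
have key : forall v, crossM (nodef (cmpv v) (g1.1 v) (ev g1 v)).1 (nodef (cmpv v) (g2.1 v) (ev g2 v)).1
    && ordM (nodef (cmpv v) (g1.1 v) (ev g1 v)).2 (nodef (cmpv v) (g2.1 v) (ev g2 v)).2.
  move=> v; have := propM_all (cmpv v) (g1.1 v) (g2.1 v) (ev g1 v) (ev g2 v).
  move/implyP; apply; rewrite hQ hN1 hN2 hC /=.
  have PA : forall u, live (u, v) -> true \in g1.2 u -> (true \in g2.2 u) || ~~ isI (g2.1 v true).
    move=> u hl ht; have ha1 := hL1 _ _ ht.
    have /and4P[_ ha2 _ _] := hC u; have ha := implyP ha2 ha1.
    case h2: (true \in g2.2 u) => //=.
    by apply: h12 hl ha _; rewrite h2.
  have PB : forall u, live (u, v) -> false \in g2.2 u -> (false \in g1.2 u) || ~~ isI (g1.1 v false).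
    move=> u hl ht; have ha1 := hL2 _ _ ht.
    have /and4P[_ _ _ ha2] := hC u; have ha := implyP ha2 ha1.
    case h2: (false \in g1.2 u) => //=.
    by apply: h11 hl ha _; rewrite h2.
  apply/and3P; split.
  - apply/implyP => /mem_ev[u [hl ht]]; case/orP: (PA u hl ht) => [h|->]; last by rewrite orbT.
    by rewrite (mem_ev2 hl h).
  - apply/implyP => /mem_ev[u [hl ht]]; case/orP: (PB u hl ht) => [h|->]; last by rewrite orbT.
    by rewrite (mem_ev2 hl h).
  apply/implyP => /andP[/andP[hi2 hi1] hh].
  apply: (head_flat _ _ _ hh).
  - move=> u; case hl: (live (u, v)) => // ht.
    by case/orP: (PA u hl ht) => //; rewrite hi2.
  - move=> u; case hl: (live (u, v)) => // ht.
    by case/orP: (PB u hl ht) => //; rewrite hi1.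
  - by move=> u; case: (live (u, v)).
split => v.
- by have [-> _] := stepE g1 v; have [-> _] := stepE g2 v; case/andP: (key v).
- by have [_ ->] := stepE g1 v; have [_ ->] := stepE g2 v; case/andP: (key v).
Qed.

Lemma CrP_step g1 g2 : (forall v, QP (cmpv v)) -> Inv g1 -> Inv g2 -> CrP g1 g2 ->
  CrP (step Q live alpha pi g1) (step Q live alpha pi g2).
Proof.
move=> hQ [hN1 hL1 h11] [hN2 hL2 h12] hC v.
have [-> _] := stepE g1 v; have [-> _] := stepE g2 v.
have := propP_all (cmpv v) (g1.1 v) (g2.1 v) (ev g1 v) (ev g2 v).
move/implyP; apply; rewrite hQ hN1 hN2 hC /=.
have PX : forall X u, live (u, v) -> X \in g1.2 u -> (X \in g2.2 u) || ~~ isI (g2.1 v X).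
  move=> X u hl ht; have ha1 := hL1 _ _ ht.
  have ha : is_adopt (g2.1 u X).
    by have /and4P[_ a _ b] := hC u; case: X ht ha1 => _; [apply: (implyP a)|apply: (implyP b)].
  case h2: (X \in g2.2 u) => //=.
  by apply: h12 hl ha _; rewrite h2.
apply/andP; split; apply/implyP => /mem_ev[u [hl ht]];
  (case/orP: (PX _ u hl ht) => [h|->]; last by rewrite orbT);
  by rewrite (mem_ev2 hl h).
Qed.


Section Init.
Variable (tau : V -> bool).

Lemma init1E SA SB v X : (init_state Q alpha tau SA SB).1 v X =
  if (if X then v \in SA else v \in SB) then Adopt else Idle.
Proof.
rewrite /init_state /seeds /=.
case hA: (v \in SA); case hB: (v \in SB); case: (tau v); case: X;
  rewrite /= /adopt /upd /= //.
Qed.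

Lemma init2E SA SB v : (init_state Q alpha tau SA SB).2 v = seeds tau SA SB v.
Proof.
rewrite /init_state /seeds /=.
by case hA: (v \in SA); case hB: (v \in SB); case: (tau v); rewrite /= /adopt /upd /=.
Qed.

Lemma mem_seeds SA SB v X : (X \in seeds tau SA SB v) = if X then v \in SA else v \in SB.
Proof.
rewrite /seeds; case hA: (v \in SA); case hB: (v \in SB); case: (tau v); case: X => //.
Qed.
End Init.

Lemma Inv_init tau SA SB : Inv (init_state Q alpha tau SA SB).
Proof.
split.
- by move=> v; rewrite /invn !init1E; case: (v \in SA); case: (v \in SB).
- by move=> v X; rewrite init2E mem_seeds init1E => ->.
- move=> u v X _; rewrite init2E mem_seeds init1E.
  by case: (if X then u \in SA else u \in SB).
Qed.

Lemma CrM_init tau (SA1 SB1 SA2 SB2 : {set V}) : SA1 \subset SA2 -> SB2 \subset SB1 ->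
  CrM (init_state Q alpha tau SA1 SB1) (init_state Q alpha tau SA2 SB2).
Proof.
move=> hA hB; split => v.
- have hA' : (v \in SA1) ==> (v \in SA2) by apply/implyP/subsetP.
  have hB' : (v \in SB2) ==> (v \in SB1) by apply/implyP/subsetP.
  rewrite /crossM !init1E; move: hA' hB'.
  by case: (v \in SA1); case: (v \in SA2); case: (v \in SB1); case: (v \in SB2).
- rewrite /ordM !init2E /seeds.
  by case: (v \in SA1); case: (v \in SA2); case: (v \in SB1); case: (v \in SB2);
    case: (tau v).
Qed.

Lemma CrP_init tau (SA1 SB1 SA2 SB2 : {set V}) : SA1 \subset SA2 -> SB1 \subset SB2 ->
  CrP (init_state Q alpha tau SA1 SB1) (init_state Q alpha tau SA2 SB2).
Proof.
move=> hA hB v.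
have hA' : (v \in SA1) ==> (v \in SA2) by apply/implyP/subsetP.
have hB' : (v \in SB1) ==> (v \in SB2) by apply/implyP/subsetP.
rewrite /crossP !init1E; move: hA' hB'.
by case: (v \in SA1); case: (v \in SA2); case: (v \in SB1); case: (v \in SB2).
Qed.

Lemma Inv_iter n g : Inv g -> Inv (iter n (step Q live alpha pi) g).
Proof. by move=> h; elim: n => //= n IH; apply: Inv_step. Qed.

Lemma CrM_iter n g1 g2 : (forall v, QM (cmpv v)) -> Inv g1 -> Inv g2 -> CrM g1 g2 ->
  CrM (iter n (step Q live alpha pi) g1) (iter n (step Q live alpha pi) g2).
Proof.
move=> hQ h1 h2 h; elim: n => //= n IH.
by apply: CrM_step => //; apply: Inv_iter.
Qed.

Lemma CrP_iter n g1 g2 : (forall v, QP (cmpv v)) -> Inv g1 -> Inv g2 -> CrP g1 g2 ->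
  CrP (iter n (step Q live alpha pi) g1) (iter n (step Q live alpha pi) g2).
Proof.
move=> hQ h1 h2 h; elim: n => //= n IH.
by apply: CrP_step => //; apply: Inv_iter.
Qed.

Lemma numA_M tau (SA1 SB1 SA2 SB2 : {set V}) : (forall v, QM (cmpv v)) ->
  SA1 \subset SA2 -> SB2 \subset SB1 ->
  (numA Q live alpha pi tau SA1 SB1 <= numA Q live alpha pi tau SA2 SB2)%N.
Proof.
move=> hQ hA hB; rewrite /numA; apply: subset_leq_card; apply/subsetP => v; rewrite !inE.
have [hC _] := CrM_iter (2 * #|V| + 1) hQ (Inv_init tau SA1 SB1) (Inv_init tau SA2 SB2)
  (CrM_init tau hA hB).
by have /and4P[_ h _ _] := hC v; apply: (implyP h).
Qed.

Lemma numA_P tau (SA1 SB1 SA2 SB2 : {set V}) : (forall v, QP (cmpv v)) ->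
  SA1 \subset SA2 -> SB1 \subset SB2 ->
  (numA Q live alpha pi tau SA1 SB1 <= numA Q live alpha pi tau SA2 SB2)%N.
Proof.
move=> hQ hA hB; rewrite /numA; apply: subset_leq_card; apply/subsetP => v; rewrite !inE.
have hC := CrP_iter (2 * #|V| + 1) hQ (Inv_init tau SA1 SB1) (Inv_init tau SA2 SB2)
  (CrP_init tau hA hB).
by have /and4P[_ h _ _] := hC v; apply: (implyP h).
Qed.

Lemma QM_of : Qminus Q -> forall v, QM (cmpv v).
Proof.
case=> h1 h2 v; rewrite /QM /cmpv /qcond /=.
by apply/andP; split; apply/implyP => h; apply: le_trans h _.
Qed.

Lemma QP_of : Qplus Q -> forall v, QP (cmpv v).
Proof.
case=> h1 h2 v; rewrite /QP /cmpv /qcond /=.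
by apply/andP; split; apply/implyP => h; apply: le_trans h _.
Qed.

End Global.

Local Open Scope ring_scope.

Lemma w_ge0 (R : realFieldType) (V : finType) (E : rel V) (p : V -> V -> R) (Q : gap R)
  (Hp : forall u v, E u v -> 0 <= p u v <= 1) (HQ : gap_valid Q)
  (live : {ffun V * V -> bool}) (c : {ffun V * bool -> 'I_3}) :
  0 <= edge_w E p live * (\prod_(x : V * bool) cell_w Q x.2 (c x))
       * ((#|{perm V}|%:R)^-1 ^+ #|V|) * ((2%:R)^-1 ^+ #|V|).
Proof.
have hq : forall X y, 0 <= qcond Q X y <= 1.
  by case: HQ => h1 h2 h3 h4 [] [].
apply: mulr_ge0; [apply: mulr_ge0; [apply: mulr_ge0|]|].
- apply: prodr_ge0 => e _; case hE: (E e.1 e.2); case: (live e) => //.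
  + by case/andP: (Hp _ _ hE).
  + by case/andP: (Hp _ _ hE) => _ h; rewrite subr_ge0.
- apply: prodr_ge0 => x _; rewrite /cell_w /lo /hi.
  have /andP[a0 a1] := hq x.2 false; have /andP[b0 b1] := hq x.2 true.
  case: (c x) => -[|[|k]] _ /=.
  + by rewrite le_min a0 b0.
  + by rewrite subr_ge0 ge_min !le_max lexx.
  + by rewrite subr_ge0 ge_max a1 b1.
- by apply: exprn_ge0; rewrite invr_ge0 ler0n.
- by apply: exprn_ge0; rewrite invr_ge0 ler0n.
Qed.

Unset Implicit Arguments.

Theorem theorem3 (R : realFieldType) (V : finType) (E : rel V)
  (p : V -> V -> R) (Q : gap R)
  (Hp : forall u v, E u v -> 0 <= p u v <= 1) (HQ : gap_valid Q) :
  ((Qplus Q \/ Qminus Q) ->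
     forall SB SA SA' : {set V}, SA \subset SA' ->
       sigmaA E p Q SA SB <= sigmaA E p Q SA' SB)
  /\ (Qplus Q ->
     forall SA SB SB' : {set V}, SB \subset SB' ->
       sigmaA E p Q SA SB <= sigmaA E p Q SA SB')
  /\ (Qminus Q ->
     forall SA SB SB' : {set V}, SB \subset SB' ->
       sigmaA E p Q SA SB' <= sigmaA E p Q SA SB).
Proof.
have gen : forall SA1 SB1 SA2 SB2 : {set V},
  (forall live alpha pi tau, (numA Q live alpha pi tau SA1 SB1 <= numA Q live alpha pi tau SA2 SB2)%N) ->
  sigmaA E p Q SA1 SB1 <= sigmaA E p Q SA2 SB2.
  move=> SA1 SB1 SA2 SB2 hn; rewrite /sigmaA.
  apply: ler_sum => live _; apply: ler_sum => c _; apply: ler_sum => pi _; apply: ler_sum => tau _.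
  by apply: ler_wpM2l; [exact: w_ge0 | rewrite ler_nat].
split; [|split].
- move=> hQ SB SA SA' hs; apply: gen => live alpha pi tau.
  case: hQ => hQ.
  + by apply: numA_P => //; apply: QP_of.
  + by apply: numA_M => //; apply: QM_of.
- move=> hQ SA SB SB' hs; apply: gen => live alpha pi tau.
  by apply: numA_P => //; apply: QP_of.
- move=> hQ SA SB SB' hs; apply: gen => live alpha pi tau.
  by apply: numA_M => //; apply: QM_of.
Qed.
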